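(* Let $G=(V,E_1,\dots,E_k)$ be a complete $k$-edge-colored graph. Assume that for every $i\in\{1,\dots,k\}$ the monochromatic subgraph $G_{|i}$, together with some labeling $\ell_i$, is a simple permutation graph, and that the quotient graph $G[M]/\mathbb{P}_{\max}(M)$ of each strong prime module $M$ of $G$ with $|M|\ge 3$ is $2$-edge-colored. Then $G$ is a complete edge-colored permutation graph.
   Context: A complete $k$-edge-colored graph $G=(V,E_1,\dots,E_k)$ is the complete graph on a finite set $V$ with edges partitioned into $k$ nonempty color classes $E_i$ (the one-vertex graph also counts); $G_{|i}=(V,E_i)$. A labeling is a bijection $\ell:V\to\{1,\dots,|V|\}$. A graph $(V,E)$ with labeling $\ell$ is a simple permutation graph of a permutation $\pi$ if for all $u,v$ with $\ell(u)>\ell(v)$: $\{u,v\}\in E$ iff $\pi^{-1}(\ell(u))<\pi^{-1}(\ell(v))$. $G$ is a complete edge-colored permutation graph if there exist a single labeling $\ell$ and permutations $\pi_1,\dots,\pi_k$ with $(G_{|i},\ell)$ a simple permutation graph of $\pi_i$ for all $i$. A module is a set $M\subseteq V$ such that for every $v\notin M$ all edges $\{u,v\}$, $u\in M$, have the same color; a strong module is a nonempty module comparable by inclusion or disjoint with every other module. For a strong module $M$ with $|M|\ge2$, $\mathbb{P}_{\max}(M)$ is the set of inclusion-maximal strong modules properly contained in $M$, and $G[M]/\mathbb{P}_{\max}(M)$ is the complete graph on $\mathbb{P}_{\max}(M)$ with $\{M_a,M_b\}$ colored by the common color of all edges between $M_a$ and $M_b$; for $|M|=1$ it is the one-vertex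 graph. A strong module is series if its quotient graph has at least two vertices and all its edges have one color, and prime otherwise. *)

(* Defs.v *)
From mathcomp Require Import all_boot all_order.
From mathcomp Require Import fingroup perm.
Set Implicit Arguments. Unset Strict Implicit. Unset Printing Implicit Defensive.

Section EdgeColored.
Variables (V : finType) (k : nat).

(* A complete k-edge-colored graph on V is given by a symmetric coloring
   col : V -> V -> 'I_k of the pairs of vertices (values on the diagonal
   are irrelevant); every color class is nonempty unless |V| <= 1. *)
Definition complete_edge_colored (col : V -> V -> 'I_k) : Prop :=
  (forall u v, col u v = col v u) /\
  (1 < #|V| -> forall i : 'I_k, exists u v, u != v /\ col u v = i).

Definition color_graph (col : V -> V -> 'I_k) (i : 'I_k) : rel V :=
  fun u v => (u != v) && (col u v == i).

(* labeling : bijection V -> {1..n} (here {0..n-1}) *)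
Definition labeling (l : V -> 'I_#|V|) : Prop := bijective l.

Definition simple_perm_graph (E : rel V) (l : V -> 'I_#|V|) (pi : 'S_#|V|) : Prop :=
  forall u v, l v < l u -> (E u v <-> (pi^-1)%g (l u) < (pi^-1)%g (l v)).

Definition complete_edge_colored_perm_graph (col : V -> V -> 'I_k) : Prop :=
  exists l : V -> 'I_#|V|, labeling l /\
  exists pis : 'I_k -> 'S_#|V|,
    forall i, simple_perm_graph (color_graph col i) l (pis i).

Variable col : V -> V -> 'I_k.

Definition is_module (M : {set V}) : bool :=
  [forall v in ~: M, forall u in M, forall u' in M, col u v == col u' v].

Definition strong_module (M : {set V}) : bool :=
  (M != set0) && is_module M &&
  [forall M' : {set V}, is_module M' ==>
     [|| M \subset M', M' \subset M | [disjoint M & M']]].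

Definition Pmax (M : {set V}) : {set {set V}} :=
  [set M' : {set V} | [&& strong_module M', M' \proper M &
     [forall M'' : {set V}, (strong_module M'' && (M'' \proper M)) ==>
        (M' \subset M'') ==> (M'' == M')]]].

(* set of colors of the edges of the quotient graph G[M]/P_max(M): the edge
   {A,B} (A <> B in P_max(M)) carries the common color of all edges between
   A and B, so the colors occurring are exactly the colors of edges u-v with
   u in A, v in B for distinct A, B in P_max(M). *)
Definition quotient_colors (M : {set V}) : {set 'I_k} :=
  [set c : 'I_k | [exists A in Pmax M, exists B in Pmax M,
     (A != B) && [exists u in A, exists v in B, col u v == c]]].

Definition series_module (M : {set V}) : bool :=
  strong_module M && (1 < #|Pmax M|) && (#|quotient_colors M| == 1).

Definition prime_module (M : {set V}) : bool :=
  strong_module M && ~~ series_module M.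

End EdgeColored.

(* Main.v *)
Require Import Defs.
From mathcomp Require Import all_boot all_order.
From mathcomp Require Import fingroup perm.
From mathcomp Require Import zify.
From Stdlib Require Import IndefiniteDescription.
Set Implicit Arguments. Unset Strict Implicit. Unset Printing Implicit Defensive.


Section Cnt.
Variables (T : finType) (lt : rel T).
Hypothesis ltT : forall u v w, lt u v -> lt v w -> lt u w.
Hypothesis ltI : forall u, lt u u = false.
Hypothesis ltTot : forall u v, u != v -> lt u v || lt v u.

Definition cnt u := #|[set w | lt w u]|.

Lemma cnt_lt u v : lt u v -> cnt u < cnt v.
Proof.
move=> uv; apply: proper_card; rewrite properE; apply/andP; split.
- by apply/subsetP=> w; rewrite !inE => /ltT; apply.
- by apply/subsetPn; exists u; rewrite !inE ?ltI.
Qed.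

Lemma cntE u v : (cnt u < cnt v) = lt u v.
Proof.
case uv: (lt u v); first exact: cnt_lt.
case: (eqVneq u v) => [->|nuv]; first by rewrite ltnn.
have := ltTot nuv; rewrite uv /= => /cnt_lt; lia.
Qed.

Lemma cnt_inj : injective cnt.
Proof.
move=> u v e; apply/eqP; apply/negPn/negP => nuv.
by case/orP: (ltTot nuv) => /cnt_lt; rewrite e ltnn.
Qed.

Lemma cnt_bound u : cnt u < #|T|.
Proof.
apply: proper_card; rewrite properE subset_predT /=.
by apply/subsetPn; exists u; rewrite ?inE ?ltI.
Qed.
End Cnt.

Section Proof.
Variables (V : finType) (k : nat) (col : V -> V -> 'I_k).
Hypothesis colC : forall u v, col u v = col v u.

Definition triple_ok (r : V -> nat) (S : {set V}) :=
  forall a b x, a \in S -> b \in S -> x \in S -> r a < r b -> r b < r x ->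
   col a x = col a b \/ col a x = col b x.

Definition good (S : {set V}) (r : V -> nat) :=
  {in S &, injective r} /\ triple_ok r S.

Lemma moduleP M u u' v : is_module col M -> v \notin M -> u \in M -> u' \in M ->
  col u v = col u' v.
Proof.
move=> /forallP H vM uM u'M.
move: (H v); rewrite in_setC vM /= => /forallP/(_ u); rewrite uM /=.
by move=> /forallP/(_ u'); rewrite u'M /= => /eqP.
Qed.

Lemma strongP M : strong_module col M ->
  [/\ M != set0, is_module col M & forall M', is_module col M' ->
     [|| M \subset M', M' \subset M | [disjoint M & M']]].
Proof.
move=> /andP [/andP [H1 H2] /forallP H3]; split => // M'.
exact: (implyP (H3 M')).
Qed.

Lemma strong1 v : strong_module col [set v].
Proof.
apply/andP; split; first (apply/andP; split).
- by apply/set0Pn; exists v; rewrite set11.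
- apply/forallP=> w; apply/implyP=> _; apply/forallP=> u; apply/implyP=> /set1P->.
  by apply/forallP=> u'; apply/implyP => /set1P ->.
- apply/forallP=> M'; apply/implyP=> _.
  case vM: (v \in M'); first by rewrite sub1set vM.
  by rewrite disjoints1 vM !orbT.
Qed.

Lemma PmaxP S A : A \in Pmax col S -> [/\ strong_module col A, A \proper S &
  forall M, strong_module col M -> M \proper S -> A \subset M -> M = A].
Proof.
rewrite inE => /and3P [sA pA /forallP H]; split => // M sM pM AM.
by apply/eqP; move: (H M); rewrite sM pM AM /=.
Qed.

Lemma Pmax_disj S A B w : A \in Pmax col S -> B \in Pmax col S ->
  w \in A -> w \in B -> A = B.
Proof.
move=> /PmaxP [sA pA mA] /PmaxP [sB pB mB] wA wB.
have [_ _ H] := strongP sA; have [_ modB _] := strongP sB.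
case/or3P: (H B modB) => [AB|BA|dis].
- by apply/esym/mA.
- by apply: mB.
- by rewrite (disjointFr dis wA) in wB.
Qed.

Lemma Pmax_cover (S : {set V}) v : 1 < #|S| -> v \in S -> exists2 A, A \in Pmax col S & v \in A.
Proof.
move=> gt1 vS.
pose P := fun M : {set V} => [&& strong_module col M, M \proper S & v \in M].
have P1 : P [set v] by rewrite /P strong1 properEcard sub1set vS cards1 gt1 set11.
case: (@arg_maxnP _ _ P (fun M : {set V} => #|M|) P1) => A /and3P [sA pA vA] Hmax.
exists A => //; rewrite inE sA pA /=; apply/forallP=> M; apply/implyP=> /andP[sM pM].
apply/implyP=> AM; apply/eqP/esym; apply/eqP; rewrite eqEcard AM /=.
by apply: Hmax; rewrite /P sM pM (subsetP AM).
Qed.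


Definition ltc (r : V -> nat) (c : 'I_k) : rel V := fun u v =>
  (r u < r v) && (col u v != c) || (r v < r u) && (col u v == c).

Lemma ltc_trans r c : good setT r -> forall u v w, ltc r c u v -> ltc r c v w -> ltc r c u w.
Proof.
move=> [rinj T] u v w.
have Tg : forall a b x, r a < r b -> r b < r x -> col a x = col a b \/ col a x = col b x.
  by move=> a b x; apply: T; rewrite inE.
have T1 := Tg u v w. have T2 := Tg u w v. have T3 := Tg v u w.
have T4 := Tg v w u. have T5 := Tg w u v. have T6 := Tg w v u.
rewrite (colC v u) (colC w v) (colC w u) in T1 T2 T3 T4 T5 T6.
have nuw : u != w -> r u != r w.
  by move=> nuw; apply/eqP => e; move/negP: nuw; apply; apply/eqP; apply: rinj; rewrite ?inE.
case: (eqVneq u w) => [<-|/nuw nuw'].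
  rewrite /ltc (colC v u); case: (ltngtP (r u) (r v)) => //=; case: eqP => //.
rewrite /ltc.
case: (ltngtP (r u) (r v)) => huv; case: (ltngtP (r v) (r w)) => hvw;
  case: (ltngtP (r u) (r w)) => huw //=; try lia.
all: try (have := T1 huv hvw); try (have := T2 huw hvw); try (have := T3 huv huw);
  try (have := T4 hvw huw); try (have := T5 huw huv); try (have := T6 hvw huv).
all: case: (eqVneq (col u v) c) => E1; case: (eqVneq (col v w) c) => E2;
  case: (eqVneq (col u w) c) => E3 //=.
all: repeat match goal with H : is_true (_ != _) |- _ => move/eqP in H end.
all: intuition congruence.
Qed.


Lemma final r : good setT r -> complete_edge_colored_perm_graph col.
Proof.
move=> gr; have [rinj _] := gr.
pose lr : rel V := fun u v => r u < r v.
have lrT : forall u v w, lr u v -> lr v w -> lr u w by move=> u v w; rewrite /lr; lia.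
have lrI : forall u, lr u u = false by move=> u; rewrite /lr ltnn.
have lrTot : forall u v, u != v -> lr u v || lr v u.
  move=> u v nuv; rewrite /lr; case: (ltngtP (r u) (r v)) => //= e.
  by exfalso; move/eqP: nuv; apply; apply: rinj; rewrite ?inE.
pose l u := Ordinal (cnt_bound lrI u).
have linj : injective l by move=> u v /(congr1 val) /= /(cnt_inj lrT lrI lrTot).
have lb : bijective l by apply: (inj_card_bij linj); rewrite card_ord.
exists l; split => //.
have [g lK gK] := lb.
have pc_ex : forall c, exists pi : 'S_#|V|, simple_perm_graph (color_graph col c) l pi.
  move=> c.
  have cT := @ltc_trans r c gr.
  have cI : forall u, ltc r c u u = false by move=> u; rewrite /ltc ltnn.
  have cTot : forall u v, u != v -> ltc r c u v || ltc r c v u.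
    move=> u v nuv; rewrite /ltc (colC v u); case: (ltngtP (r u) (r v)) => e /=.
    - by case: eqP.
    - by case: eqP.
    - by exfalso; move/eqP: nuv; apply; apply: rinj; rewrite ?inE.
  pose p u := Ordinal (cnt_bound cI u).
  have pinj : injective (fun o => p (g o)).
    by move=> o1 o2 /(congr1 val) /= /(cnt_inj cT cI cTot) /(can_inj gK).
  exists (perm pinj)^-1%g => u v luv.
  rewrite invgK !permE /= lK /color_graph.
  have rvu : r v < r u by move: luv; rewrite /= (cntE lrT lrI lrTot).
  have nuv : u != v by apply/eqP => e; move: rvu; rewrite e ltnn.
  rewrite (cntE cT cI cTot) /ltc nuv /= lK rvu ltnNge (ltnW rvu) /=.
  by split.
exact: functional_choice pc_ex.
Qed.


Lemma perm_triple i l pi a b x : simple_perm_graph (color_graph col i) l pi ->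
  l a < l b -> l b < l x ->
  (col a b = i -> col b x = i -> col a x = i) /\
  (col a b != i -> col b x != i -> col a x != i).
Proof.
move=> H lab lbx.
have Hba := H b a lab. have Hxb := H x b lbx. have Hxa := H x a (ltn_trans lab lbx).
have nba : b != a by apply/eqP => e; move: lab; rewrite e ltnn.
have nxb : x != b by apply/eqP => e; move: lbx; rewrite e ltnn.
have nxa : x != a by apply/eqP => e; move: (ltn_trans lab lbx); rewrite e ltnn.
rewrite /color_graph nba nxb nxa /= in Hba Hxb Hxa.
rewrite (colC a b) (colC b x) (colC a x).
set pa := (pi^-1)%g (l a) in Hba Hxa. set pb := (pi^-1)%g (l b) in Hba Hxb.
set px := (pi^-1)%g (l x) in Hxb Hxa.
split.
- move=> /eqP /Hba e1 /eqP /Hxb e2; apply/eqP; apply/Hxa; exact: ltn_trans e2 e1.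
- move=> n1 n2; apply/negP => /Hxa e3.
  have f1 : ~ (pb < pa) by move/Hba; apply/negP.
  have f2 : ~ (px < pb) by move/Hxb; apply/negP.
  lia.
Qed.

Hypothesis Hperm : forall i : 'I_k, exists l : V -> 'I_#|V|, labeling l /\
     exists pi : 'S_#|V|, simple_perm_graph (color_graph col i) l pi.
Hypothesis Hprime : forall M : {set V}, prime_module col M -> 3 <= #|M| ->
     #|quotient_colors col M| = 2.

Lemma card3 (S : {set V}) a b x : a \in S -> b \in S -> x \in S ->
  a != b -> b != x -> a != x -> 3 <= #|S|.
Proof.
move=> aS bS xS nab nbx nax.
have sub : [set a; b; x] \subset S.
  by apply/subsetP => y; rewrite !inE => /orP [/orP [] | ] /eqP ->.
apply: leq_trans (subset_leq_card sub).
by rewrite -setUA cardsU1 cards2 !inE negb_or nab nax nbx.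
Qed.

Lemma fin3 (i j cab cbx cax : 'I_k) : (cab = i -> cbx = i -> cax = i) ->
  (cab != i -> cbx != i -> cax != i) -> cab = i \/ cab = j -> cbx = i \/ cbx = j ->
  cax = i \/ cax = j -> cax = cab \/ cax = cbx.
Proof.
move=> T1 T2 [] e1 [] e2 [] e3; subst; try by [left|right].
- by move: (T1 erefl erefl) => ->; left.
- case: (eqVneq j i) => [->|nji]; first by left.
  by move: (T2 nji nji); rewrite eqxx.
Qed.

Lemma main S : strong_module col S -> exists r, good S r.
Proof.
have [n] := ubnP #|S|; elim: n S => // n IH S ltSn strS.
have [le1|gt1] := leqP #|S| 1.
  exists (fun v => val (enum_rank v)); split.
    by move=> u w _ _ /val_inj/enum_rank_inj.
  move=> a b x aS bS xS rab _; exfalso.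
  have nab : a != b by apply/eqP => e; move: rab; rewrite e ltnn.
  have sub : [set a; b] \subset S by apply/subsetP => y; rewrite !inE => /orP [] /eqP ->.
  move: (subset_leq_card sub); rewrite cards2 nab; lia.
have [Sn0 modS _] := strongP strS.
have [v0 v0S] := set0Pn _ Sn0.
have cover := fun v (vS : v \in S) => Pmax_cover gt1 vS.
have [i [j Hij]] : exists i j, 3 <= #|S| ->
    forall c, c \in quotient_colors col S -> c = i \/ c = j.
  case Hser: (series_module col S).
    move: Hser => /andP [_ /cards1P [c Hc]]; exists c, c => _ c'.
    by rewrite Hc inE => /eqP ->; left.
  case h3: (3 <= #|S|); last by exists (col v0 v0), (col v0 v0).
  have pS : prime_module col S by rewrite /prime_module strS Hser.
  have /eqP /cards2P [c1 [c2 [_ Hc]]] := Hprime pS h3.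
  by exists c1, c2 => _ c'; rewrite Hc !inE => /orP [] /eqP ->; [left|right].
have [l [ll [pi Hpi]]] := Hperm i.
have IHp : forall A, exists r, A \in Pmax col S -> good A r.
  move=> A; case AP: (A \in Pmax col S); last by exists (fun _ => 0).
  have [sA pAS _] := PmaxP AP.
  have ltA : #|A| < n by move: (proper_card pAS) ltSn; lia.
  by have [r gr] := IH A ltA sA; exists r.
have [R HR] := functional_choice (fun A r => A \in Pmax col S -> good A r) IHp.
pose part v := odflt set0 [pick A in Pmax col S | v \in A].
have partP : forall v, v \in S -> part v \in Pmax col S /\ v \in part v.
  move=> v vS; rewrite /part; case: pickP => [A /andP[]|H] //=.
  by exfalso; have [A AP vA] := cover v vS; move: (H A); rewrite AP vA.
pose rep (A : {set V}) := odflt v0 [pick x in A].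
have repP : forall A, A \in Pmax col S -> rep A \in A.
  move=> A AP; have [sA _ _] := PmaxP AP; have [An0 _ _] := strongP sA.
  have [w wA] := set0Pn _ An0.
  by rewrite /rep; case: pickP => [y|H] //=; move: (H w); rewrite wA.
pose q v := val (l (rep (part v))).
pose s v := R (part v) v.
pose B := \sum_(w : V) (s w).+1.
have sB : forall v, s v < B.
  by move=> v; rewrite /B (bigD1 v) //=; lia.
have linj : injective l by apply: bij_inj.
have qeq : forall u w, u \in S -> w \in S -> q u = q w -> part u = part w.
  move=> u w uS wS /val_inj /linj e.
  have [Pu uPu] := partP u uS; have [Pw wPw] := partP w wS.
  by apply: (Pmax_disj Pu Pw (repP _ Pu)); rewrite e repP.
have notin : forall u w, u \in S -> w \in S -> part u != part w -> w \notin part u.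
  move=> u w uS wS ne; apply/negP => wu.
  have [Pu uPu] := partP u uS; have [Pw wPw] := partP w wS.
  by move/eqP: ne; apply; apply: (Pmax_disj Pu Pw wu wPw).
have cross : forall u w, u \in S -> w \in S -> part u != part w ->
    col u w = col (rep (part u)) (rep (part w)).
  move=> u w uS wS ne.
  have [Pu uPu] := partP u uS; have [Pw wPw] := partP w wS.
  have [su _ _] := PmaxP Pu; have [sw _ _] := PmaxP Pw.
  have [_ mu _] := strongP su; have [_ mw _] := strongP sw.
  rewrite (moduleP mu (notin _ _ uS wS ne) uPu (repP _ Pu)) colC.
  rewrite (moduleP mw _ wPw (repP _ Pw)) //.
  by apply/negP => /(Pmax_disj Pw Pu) /(_ (repP _ Pu)) e; move/eqP: ne; apply.
have crossQ : forall u w, u \in S -> w \in S -> part u != part w ->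
    col u w \in quotient_colors col S.
  move=> u w uS wS ne; rewrite (cross u w uS wS ne) inE.
  have [Pu uPu] := partP u uS; have [Pw wPw] := partP w wS.
  apply/existsP; exists (part u); rewrite Pu /=; apply/existsP; exists (part w).
  rewrite Pw ne /=; apply/existsP; exists (rep (part u)); rewrite repP //=.
  by apply/existsP; exists (rep (part w)); rewrite repP //=.
exists (fun v => q v * B + s v); split.
  move=> u w uS wS /= e.
  have sBu := sB u; have sBw := sB w.
  have eq1 : q u = q w by nia.
  have eq2 : s u = s w by nia.
  have pe := qeq u w uS wS eq1.
  have [Pu uPu] := partP u uS; have [_ wPw] := partP w wS.
  have [gi _] := HR _ Pu; apply: gi => //; first by rewrite pe.
  by move: eq2; rewrite /s pe.
move=> a b x aS bS xS /= rab rbx.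
have sBa := sB a; have sBb := sB b; have sBx := sB x.
have qab : q a <= q b by nia.
have qbx : q b <= q x by nia.
have [Pa aPa] := partP a aS; have [Pb bPb] := partP b bS; have [Px xPx] := partP x xS.
have [sPa _ _] := PmaxP Pa; have [_ ma _] := strongP sPa.
have [sPb _ _] := PmaxP Pb; have [_ mb _] := strongP sPb.
case: (eqVneq (part a) (part b)) => eab.
  case: (eqVneq (part b) (part x)) => ebx.
    have hq1 : q a = q b by rewrite /q eab.
    have hq2 : q b = q x by rewrite /q ebx.
    have r1 : s a < s b by move: rab; rewrite hq1 ltn_add2l.
    have r2 : s b < s x by move: rbx; rewrite hq2 ltn_add2l.
    have [_ gT] := HR _ Pa.
    have r1' : R (part a) a < R (part a) b by move: r1; rewrite /s -eab.
    have r2' : R (part a) b < R (part a) x by move: r2; rewrite /s -ebx -eab.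
    have bPa : b \in part a by rewrite eab.
    have xPa : x \in part a by rewrite eab ebx.
    exact: (gT a b x aPa bPa xPa r1' r2').
  right; apply: (moduleP ma _ aPa); first by apply: notin; rewrite // eab.
  by rewrite eab.
case: (eqVneq (part b) (part x)) => ebx.
  left; rewrite colC (colC a b); apply: (moduleP mb _ _ bPb).
    by apply: notin; rewrite // eq_sym.
  by rewrite ebx.
case: (eqVneq (part a) (part x)) => eax.
  exfalso; have : q a = q x by rewrite /q eax.
  move=> e; have : q a = q b by apply/eqP; rewrite eqn_leq qab e qbx.
  by move/(qeq _ _ aS bS)/eqP; rewrite (negbTE eab).
have qab' : q a < q b.
  rewrite ltn_neqAle qab andbT; apply/eqP => /(qeq _ _ aS bS) e; by rewrite e eqxx in eab.
have qbx' : q b < q x.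
  rewrite ltn_neqAle qbx andbT; apply/eqP => /(qeq _ _ bS xS) e; by rewrite e eqxx in ebx.
have [T1 T2] := perm_triple Hpi qab' qbx'.
have neq : forall u w, part u != part w -> u != w.
  by move=> u w ne; apply/eqP => e; rewrite e eqxx in ne.
have h3 : 3 <= #|S| by apply: (card3 aS bS xS); apply: neq.
have Qab := Hij h3 _ (crossQ _ _ aS bS eab).
have Qbx := Hij h3 _ (crossQ _ _ bS xS ebx).
have Qax := Hij h3 _ (crossQ _ _ aS xS eax).
rewrite (cross _ _ aS bS eab) (cross _ _ bS xS ebx) (cross _ _ aS xS eax) in Qab Qbx Qax *.
exact: (fin3 T1 T2 Qab Qbx Qax).
Qed.

End Proof.

Theorem lemma4p12 (V : finType) (k : nat) (col : V -> V -> 'I_k) :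
  complete_edge_colored col ->
  (forall i : 'I_k, exists l : V -> 'I_#|V|, labeling l /\
     exists pi : 'S_#|V|, simple_perm_graph (color_graph col i) l pi) ->
  (forall M : {set V}, prime_module col M -> 3 <= #|M| ->
     #|quotient_colors col M| = 2) ->
  complete_edge_colored_perm_graph col.
Proof.
move=> [colC _] Hperm Hprime.
case: (pickP (fun _ : V => true)) => [v0 _|none].
- have strT : strong_module col [set: V].
    apply/andP; split; first (apply/andP; split).
    + by apply/set0Pn; exists v0; rewrite inE.
    + by apply/forallP => w; rewrite !inE.
    + by apply/forallP => M; apply/implyP => _; rewrite subsetT orbT.
  have [r gr] := main colC Hperm Hprime strT.
  exact: (@final _ _ col colC r gr).
- apply: (@final _ _ _ colC (fun _ => 0)); split.
  + by move=> u; have := none u.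
  + by move=> a; have := none a.
Qed.
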